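(* Let $A$ be a sub-tree of $T$, $I\subseteq\mathcal{I}_A$, and let $I=I'\cup I''$ with $I'\cap I''=\emptyset$. For every $S\in\mathcal{M}_A^I$, setting $S'=S\cap V_A^{I'}$ and $S''=S\cap V_A^{I''}$, we have $S'\in\mathcal{M}_A^{I'}$ and $S''\in\mathcal{M}_A^{I''}$. In particular, $\mathcal{M}_A$ is contained in $\{S_0\cup S_1\cup\dots\cup S_m: S_i\in\mathcal{M}_A^{\{i\}}\}$.
   Context: Setting. $T$ is a finite tree rooted at $r_T$, node set $V_T$; every edge $e$ has weight $w_e\ge 0$. Every node $v$ has a probability $\pi_v\in(0,1]$ and a prize $p_v\in\mathbb{R}$. $d(v)$ is the total weight of the path from $r_T$ to $v$. A random set $\omega\subseteq V_T$ contains each node $v$ independently with probability $\pi_v$. For $S\subseteq V_T$, $P(S)=1-\prod_{s\in S}(1-\pi_s)$ ($P(\emptyset)=0$). For a node $a$, the sub-tree $A$ rooted at $r_A=a$ consists of $a$ and all its descendants, with node set $V_A$; if $a$ has children $c_1,\dots,c_m$, then $A_i$ ($1\le i\le m$) is the sub-tree rooted at $c_i$, $A_0$ is the sub-tree consisting of the single node $r_A$, $\mathcal{I}_A=\{0,1,\dots,m\}$, and $V_A^I=\bigcup_{i\in I}V_{A_i}$ for $I\subseteq\mathcal{I}_A$. For $Q\subseteq V_T$, $W(Q)$ is the total weight of the edges lying on at least one path from $r_T$ to a node of $Q$. For $S\subseteq V_A$ and $x\le d(r_A)$ the expected profit is $G(S,x)=\sum_{s\in S}p_s\pi_s-\mathbb{E}[W(S\cap\omega)]+x\,P(S)$.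 Characteristic function. For a sub-tree $A$, $I\subseteq\mathcal{I}_A$ and $x\in[0,d(r_A)]$, $f_A^I(x)=\max_{S\subseteq V_A^I}G(S,x)$, and $f_A=f_A^{\mathcal{I}_A}$. A set $S\subseteq V_A^I$ with $G(S,x)=f_A^I(x)$ is an optimal set (for $f_A^I$) at $x$. The matryoshka $\mathcal{M}_A^I$ is the family of all $S\subseteq V_A^I$ such that for some $x\in[0,d(r_A)]$, $S$ is an optimal set at $x$ and no proper superset of $S$ contained in $V_A^I$ is optimal at $x$; $\mathcal{M}_A=\mathcal{M}_A^{\mathcal{I}_A}$. *)

(* Defs.v *)
From mathcomp Require Import all_boot all_order all_algebra.
Set Implicit Arguments. Unset Strict Implicit. Unset Printing Implicit Defensive.
Import Order.TTheory GRing.Theory Num.Theory.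
Local Open Scope ring_scope.

(* A rooted tree on a finite node type V is given by its root r and a parent
   map (parent r = r, every node reaches r by iterating parent).  The edge
   between a node v <> r and its parent carries weight w v. *)
Section Tree.
Variables (R : realFieldType) (V : finType) (r : V) (parent : V -> V).
Variables (w pi p : V -> R).

Definition anc (u v : V) : bool :=
  [exists k : 'I_#|V|.+1, iter k parent v == u].

Definition dist (v : V) : R := \sum_(u | (u != r) && anc u v) w u.

Definition Wt (Q : {set V}) : R :=
  \sum_(u | (u != r) && [exists q in Q, anc u q]) w u.

(* probability of the outcome omega of the random set *)
Definition probw (om : {set V}) : R :=
  (\prod_(v in om) pi v) * \prod_(v in ~: om) (1 - pi v).

Definition EW (S : {set V}) : R := \sum_(om : {set V}) probw om * Wt (S :&: om).

Definition Pr (S : {set V}) : R := 1 - \prod_(s in S) (1 - pi s).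

Definition G (S : {set V}) (x : R) : R :=
  \sum_(s in S) p s * pi s - EW S + x * Pr S.

Definition subtree (a : V) : {set V} := [set u | anc a u].
Definition children (a : V) : {set V} := [set c | (c != r) && (parent c == a)].
(* Index set I_A: index 0 is represented by the node a itself,
   index i >= 1 by the child c_i. *)
Definition IA (a : V) : {set V} := a |: children a.
Definition comp (a c : V) : {set V} := if c == a then [set a] else subtree c.
Definition VAI (a : V) (I : {set V}) : {set V} := \bigcup_(c in I) comp a c.

Definition optimal (a : V) (I : {set V}) (x : R) (S : {set V}) : Prop :=
  S \subset VAI a I /\ forall S' : {set V}, S' \subset VAI a I -> G S' x <= G S x.

Definition matryoshka (a : V) (I : {set V}) (S : {set V}) : Prop :=
  exists x : R, [/\ 0 <= x <= dist a, optimal a I x S &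
    forall S' : {set V}, S \proper S' -> S' \subset VAI a I -> ~ optimal a I x S'].

End Tree.

(* Main.v *)
Require Import Defs.
From mathcomp Require Import all_boot all_order all_algebra zify ring lra.
Set Implicit Arguments. Unset Strict Implicit. Unset Printing Implicit Defensive.
Import Order.TTheory GRing.Theory Num.Theory.
Local Open Scope ring_scope.

Section TreeFacts.
Variables (V : finType) (r : V) (parent : V -> V).
Hypothesis Hroot : parent r = r.
Hypothesis Hreach : forall v, exists k, iter k parent v = r.

Lemma iter_bound k v : exists2 k', (k' <= #|V|)%N & iter k' parent v = iter k parent v.
Proof.
elim: k {-2}k (leqnn k) => [|n IH] k Hk.
  by exists 0%N => //; move: Hk; rewrite leqn0 => /eqP ->.
case: (leqP k #|V|) => Hkv; first by exists k.
pose f := fun i : 'I_#|V|.+1 => iter i parent v.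
have : ~~ injectiveb f.
  apply/negP => /injectiveP /leq_card; by rewrite card_ord ltnn.
case/injectivePn => i [j] Hij Hf.
wlog lij : i j Hij Hf / (i < j)%N.
  move=> W; case: (ltngtP i j) => h; first exact: (W i j).
  - by apply: (W j i) => //; rewrite eq_sym.
  - by move: Hij; rewrite -val_eqE /= h eqxx.
have Hj : (j <= #|V|)%N by rewrite -ltnS.
have E : iter k parent v = iter (k - (j - i)) parent v.
  have -> : k = ((k - j) + j)%N by rewrite subnK // (leq_trans Hj) // ltnW.
  rewrite iterD (_ : iter j parent v = iter i parent v); last exact: (esym Hf).
  rewrite -iterD; congr iter.
  have := ltn_ord i; have := ltn_ord j; lia.
rewrite E; apply: IH.
have := ltn_ord i; have := ltn_ord j; lia.
Qed.

Lemma ancP u v : reflect (exists k, iter k parent v = u) (anc parent u v).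
Proof.
apply: (iffP existsP) => [[k /eqP <-]|[k Hk]]; first by exists k.
have [k' Hk' E] := iter_bound k v.
by exists (Ordinal (n:=#|V|.+1) Hk'); rewrite /= E Hk.
Qed.

Lemma anc_refl u : anc parent u u.
Proof. by apply/ancP; exists 0%N. Qed.

Lemma anc_trans u v x : anc parent u v -> anc parent v x -> anc parent u x.
Proof.
move=> /ancP [k1 H1] /ancP [k2 H2]; apply/ancP; exists (k1 + k2)%N.
by rewrite iterD H2.
Qed.

Lemma anc_parent c : anc parent (parent c) c.
Proof. by apply/ancP; exists 1%N. Qed.

Lemma anc_chain u x q : anc parent u q -> anc parent x q ->
  anc parent u x \/ anc parent x u.
Proof.
move=> /ancP [k1 H1] /ancP [k2 H2]; case: (leqP k1 k2) => h.
  right; apply/ancP; exists (k2 - k1)%N; by rewrite -H1 -iterD subnK.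
left; apply/ancP; exists (k1 - k2)%N; by rewrite -H2 -iterD subnK // ltnW.
Qed.

Lemma iter_r k : iter k parent r = r.
Proof. by elim: k => //= k ->. Qed.

Lemma anc_antisym u v : anc parent u v -> anc parent v u -> u = v.
Proof.
move=> /ancP [k1 H1] /ancP [k2 H2].
have Hper n : iter (n * (k1 + k2)) parent v = v.
  elim: n => [|n IH] //; by rewrite mulSn iterD IH addnC iterD H1 H2.
have [K HK] := Hreach v.
case: (posnP (k1 + k2)) => h.
  by move: h => /eqP; rewrite addn_eq0 => /andP [/eqP e1 _]; rewrite -H1 e1.
have HvK : v = r.
  rewrite -(Hper K) -(subnK (_ : K <= K * (k1 + k2))%N) ?iterD ?HK ?iter_r //.
  by rewrite leq_pmulr.
by rewrite -H1 HvK iter_r.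
Qed.
End TreeFacts.
Section Comp.
Variables (V : finType) (r : V) (parent : V -> V).
Hypothesis Hroot : parent r = r.
Hypothesis Hreach : forall v, exists k, iter k parent v = r.
Local Notation anc := (anc parent).

Lemma IA_child a c : c \in IA r parent a -> c != a -> parent c = a /\ c != r.
Proof.
rewrite /IA !inE => /orP [/eqP -> | /andP [Hc /eqP Hp]]; first by rewrite eqxx.
by [].
Qed.

Lemma comp_sub a c q : c \in IA r parent a -> q \in Defs.comp parent a c -> anc a q.
Proof.
rewrite /Defs.comp; case: eqP => [-> _|/eqP Hca Hc]; first by rewrite inE => /eqP ->; exact: anc_refl.
have [Hp _] := IA_child Hc Hca.
rewrite /subtree inE => H; apply: anc_trans H; rewrite -Hp; exact: anc_parent.
Qed.

Lemma child_up a c q u : c \in IA r parent a -> q \in Defs.comp parent a c ->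
  anc u q -> ~~ anc u a -> anc c u.
Proof.
move=> Hc; rewrite /Defs.comp; case: eqP => [-> |/eqP Hca].
  by rewrite inE => /eqP -> ->.
have [Hp _] := IA_child Hc Hca.
rewrite /subtree inE => Hcq Huq Hua.
case: (anc_chain Huq Hcq) => // /ancP [[|k] Hk].
  by rewrite -Hk; exact: anc_refl.
move: Hua; rewrite -Hk iterSr Hp => /negP []; apply/ancP; by exists k.
Qed.

Lemma key a c1 c2 q1 q2 u : c1 \in IA r parent a -> c2 \in IA r parent a -> c1 != c2 ->
  q1 \in Defs.comp parent a c1 -> q2 \in Defs.comp parent a c2 ->
  anc u q1 -> anc u q2 -> anc u a.
Proof.
move=> H1 H2 H12 Hq1 Hq2 Hu1 Hu2; case: (boolP (anc u a)) => // Hua; exfalso.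
have A1 := child_up H1 Hq1 Hu1 Hua; have A2 := child_up H2 Hq2 Hu2 Hua.
have Hc1a : c1 != a.
  apply/negP => /eqP E; move: Hq1; rewrite /Defs.comp E eqxx inE => /eqP E'.
  by move: Hua; rewrite -E' Hu1.
have Hc2a : c2 != a.
  apply/negP => /eqP E; move: Hq2; rewrite /Defs.comp E eqxx inE => /eqP E'.
  by move: Hua; rewrite -E' Hu2.
have [P1 R1] := IA_child H1 Hc1a; have [P2 R2] := IA_child H2 Hc2a.
have gen x y : x != y -> x != a -> parent x = a -> parent y = a -> ~ anc x y.
  move=> Hxy Hxa Px Py /ancP [[|k] Hk]; first by move: Hxy; rewrite -Hk eqxx.
  move: Hk; rewrite iterSr Py => Hk.
  have h1 : anc x a by apply/ancP; exists k.
  have h2 : anc a x by rewrite -Px; exact: anc_parent.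
  have : x = a := anc_antisym Hroot Hreach h1 h2.
  by move/eqP; rewrite (negPf Hxa).
case: (anc_chain A1 A2) => h.
  exact: (gen c1 c2 H12 Hc1a P1 P2).
by apply: (gen c2 c1) => //; rewrite eq_sym.
Qed.

Lemma comp_disj a c1 c2 q : c1 \in IA r parent a -> c2 \in IA r parent a -> c1 != c2 ->
  q \in Defs.comp parent a c1 -> q \in Defs.comp parent a c2 -> False.
Proof.
move=> H1 H2 H12 Hq1 Hq2.
have Hqa := key H1 H2 H12 Hq1 Hq2 (anc_refl _ _) (anc_refl _ _).
have Eq : q = a := anc_antisym Hroot Hreach Hqa (comp_sub H1 Hq1).
have [c [Hc Hca Hqc]] : exists c, [/\ c \in IA r parent a, c != a & q \in Defs.comp parent a c].
  case: (eqVneq c1 a) => h; last by exists c1.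
  by exists c2; split => //; rewrite -h eq_sym.
have [Pc _] := IA_child Hc Hca.
move: Hqc; rewrite /Defs.comp (negPf Hca) /subtree inE Eq => Hac.
have : c = a := anc_antisym Hroot Hreach (ltac:(exact: Hac)) (ltac:(rewrite -Pc; exact: anc_parent)).
by move=> E; move: Hca; rewrite E eqxx.
Qed.
End Comp.
Section Real.
Variables (R : realFieldType) (V : finType) (r : V) (parent : V -> V).
Variables (w pi p : V -> R).
Hypothesis Hroot : parent r = r.
Hypothesis Hreach : forall v, exists k, iter k parent v = r.
Local Notation anc := (anc parent).

Lemma Wt_ind Q : Wt r parent w Q = \sum_(u | u != r) w u * ([exists q in Q, anc u q])%:R.
Proof.
rewrite /Wt big_mkcondr /=; apply: eq_bigr => u _; case: ifP => _; by rewrite ?mulr1 ?mulr0.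
Qed.

Lemma dist_ind a : dist r parent w a = \sum_(u | u != r) w u * (anc u a)%:R.
Proof.
rewrite /dist big_mkcondr /=; apply: eq_bigr => u _; case: ifP => _; by rewrite ?mulr1 ?mulr0.
Qed.

Lemma VAIP a (I : {set V}) q : reflect (exists2 c, c \in I & q \in Defs.comp parent a c) (q \in VAI parent a I).
Proof. exact: bigcupP. Qed.

Lemma exists_setU (X Y : {set V}) (P : pred V) :
  [exists q in X :|: Y, P q] = [exists q in X, P q] || [exists q in Y, P q].
Proof.
apply/existsP/orP => [[q /andP [] ]|].
  by rewrite in_setU => /orP [] Hq Pq; [left|right]; apply/existsP; exists q; rewrite Hq.
by case => /existsP [q /andP [Hq Pq]]; exists q; rewrite in_setU Hq ?orbT.
Qed.

Lemma exists_sub a u (X : {set V}) : anc u a -> (forall q, q \in X -> anc a q) ->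
  [exists q in X, anc u q] = (X != set0).
Proof.
move=> Hu HX; apply/existsP/set0Pn => [[q /andP [Hq _]]|[q Hq]]; first by exists q.
by exists q; rewrite Hq (anc_trans Hu (HX _ Hq)).
Qed.

Section Split.
Variables (a : V) (I1 I2 : {set V}).
Hypotheses (H1 : I1 \subset IA r parent a) (H2 : I2 \subset IA r parent a)
  (H12 : [disjoint I1 & I2]).

Lemma VAI_anc (I : {set V}) q : I \subset IA r parent a -> q \in VAI parent a I -> anc a q.
Proof. move=> HI /VAIP [c Hc Hq]; exact: (comp_sub (subsetP HI _ Hc) Hq). Qed.

Lemma disj_cross u q1 q2 : q1 \in VAI parent a I1 -> q2 \in VAI parent a I2 ->
  anc u q1 -> anc u q2 -> anc u a.
Proof.
move=> /VAIP [c1 Hc1 Hq1] /VAIP [c2 Hc2 Hq2].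
have Hne : c1 != c2 by apply/eqP => E; move: (disjointFr H12 Hc1); rewrite E Hc2.
exact: (key Hroot Hreach (subsetP H1 _ Hc1) (subsetP H2 _ Hc2) Hne Hq1 Hq2).
Qed.

Lemma VAI_disj (X Y : {set V}) : X \subset VAI parent a I1 -> Y \subset VAI parent a I2 ->
  [disjoint X & Y].
Proof.
move=> HX HY; rewrite -setI_eq0; apply/eqP/setP => q; rewrite !inE.
apply/negP => /andP [/(subsetP HX) /VAIP [c1 Hc1 Hq1] /(subsetP HY) /VAIP [c2 Hc2 Hq2]].
have Hne : c1 != c2 by apply/eqP => E; move: (disjointFr H12 Hc1); rewrite E Hc2.
exact: (comp_disj Hroot Hreach (subsetP H1 _ Hc1) (subsetP H2 _ Hc2) Hne Hq1 Hq2).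
Qed.

Lemma Wt_split (X Y : {set V}) : X \subset VAI parent a I1 -> Y \subset VAI parent a I2 ->
  Wt r parent w (X :|: Y) = Wt r parent w X + Wt r parent w Y
    - dist r parent w a * ((X != set0)%:R * (Y != set0)%:R).
Proof.
move=> HX HY; rewrite !Wt_ind dist_ind mulr_suml -big_split -sumrB /=.
apply: eq_bigr => u _.
case: (boolP (anc u a)) => Hua.
  have AX : forall q, q \in X -> anc a q.
    by move=> q Hq; apply: VAI_anc H1 _; apply: (subsetP HX).
  have AY : forall q, q \in Y -> anc a q.
    by move=> q Hq; apply: VAI_anc H2 _; apply: (subsetP HY).
  have AXY : forall q, q \in X :|: Y -> anc a q.
    by move=> q; rewrite in_setU => /orP [] Hq; [apply: AX|apply: AY].
  rewrite (exists_sub Hua AX) (exists_sub Hua AY) (exists_sub Hua AXY).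
  rewrite setU_eq0.
  by case: (X == set0); case: (Y == set0); rewrite /= ?mulr1 ?mulr0; ring.
rewrite exists_setU.
have NB : ~~ ([exists q in X, anc u q] && [exists q in Y, anc u q]).
  apply/negP => /andP [/existsP [q1 /andP [Hq1 A1]] /existsP [q2 /andP [Hq2 A2]]].
  by move: Hua; rewrite (disj_cross (subsetP HX _ Hq1) (subsetP HY _ Hq2) A1 A2).
move: NB => /=.
by case: [exists q in X, anc u q]; case: [exists q in Y, anc u q]; rewrite /= ?mulr1 ?mulr0 => //= _; ring.
Qed.
End Split.

Lemma probw_avoid (Z : {set V}) :
  \sum_(om : {set V}) probw pi om * (Z :&: om == set0)%:R = \prod_(z in Z) (1 - pi z).
Proof.
have E : \prod_i ((if i \in Z then 0 else pi i) + (1 - pi i)) = \prod_(z in Z) (1 - pi z).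
  rewrite [RHS]big_mkcond; apply: eq_bigr => i _; case: ifP => _; first by rewrite add0r.
  by rewrite addrC subrK.
rewrite -E bigA_distr; apply: eq_bigr => om _.
rewrite (bigID (mem om)) /= /probw.
have -> : \prod_(i | ~~ (i \in om)) (if i \in om then (if i \in Z then 0 else pi i) else 1 - pi i)
   = \prod_(v in ~: om) (1 - pi v).
  by apply: eq_big => [v|v Hv]; rewrite ?inE // (negPf Hv).
case: (eqVneq (Z :&: om) set0) => HZ.
  rewrite mulr1; congr (_ * _); apply: eq_bigr => i Hi; rewrite Hi.
  case: ifP => // HiZ; by move: HZ => /setP /(_ i); rewrite !inE HiZ Hi.
have [z] := set0Pn _ HZ; rewrite inE => /andP [Hz Hzo].
by rewrite mulr0 (bigD1 z) //= Hzo Hz !mul0r.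
Qed.

Lemma probw_sum1 : \sum_(om : {set V}) probw pi om = 1.
Proof.
have := probw_avoid set0; rewrite big_set0 => <-.
by apply: eq_bigr => om _; rewrite set0I eqxx mulr1.
Qed.

Lemma sum_setU_disj (X Y : {set V}) (F : V -> R) : [disjoint X & Y] ->
  \sum_(i in X :|: Y) F i = \sum_(i in X) F i + \sum_(i in Y) F i.
Proof.
move=> D; rewrite -bigU //; apply: eq_bigl => i; by rewrite in_setU.
Qed.

Lemma prod_setU_disj (X Y : {set V}) (F : V -> R) : [disjoint X & Y] ->
  \prod_(i in X :|: Y) F i = \prod_(i in X) F i * \prod_(i in Y) F i.
Proof.
move=> D; rewrite -bigU //; apply: eq_bigl => i; by rewrite in_setU.
Qed.

Section Split2.
Variables (a : V) (I1 I2 : {set V}).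
Hypotheses (H1 : I1 \subset IA r parent a) (H2 : I2 \subset IA r parent a)
  (H12 : [disjoint I1 & I2]).

Lemma EW_split (X Y : {set V}) : X \subset VAI parent a I1 -> Y \subset VAI parent a I2 ->
  EW r parent w pi (X :|: Y) = EW r parent w pi X + EW r parent w pi Y
    - dist r parent w a * (Pr pi X * Pr pi Y).
Proof.
move=> HX HY.
have D : [disjoint X & Y] := VAI_disj H1 H2 H12 HX HY.
have Q := probw_avoid X; have QY := probw_avoid Y; have QXY := probw_avoid (X :|: Y).
rewrite prod_setU_disj // in QXY.
set d := dist r parent w a.
rewrite /EW.
rewrite (eq_bigr (fun om => probw pi om * Wt r parent w (X :&: om) + probw pi om * Wt r parent w (Y :&: om)
   - d * (probw pi om - probw pi om * (X :&: om == set0)%:R - probw pi om * (Y :&: om == set0)%:R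
          + probw pi om * ((X :|: Y) :&: om == set0)%:R))); last first.
  move=> om _; rewrite setIUl (Wt_split H1 H2 H12) -/d; last 2 first.
  - exact: subset_trans (subsetIl _ _) HX.
  - exact: subset_trans (subsetIl _ _) HY.
  rewrite setU_eq0.
  by case: (X :&: om == set0); case: (Y :&: om == set0); rewrite /= ?mulr1 ?mulr0; ring.
rewrite sumrB big_split /= -mulr_sumr big_split sumrB sumrB /=.
rewrite probw_sum1 Q QY QXY /Pr.
ring.
Qed.

Lemma G_split (X Y : {set V}) x : X \subset VAI parent a I1 -> Y \subset VAI parent a I2 ->
  G r parent w pi p (X :|: Y) x = G r parent w pi p X x + G r parent w pi p Y x
    + (dist r parent w a - x) * (Pr pi X * Pr pi Y).
Proof.
move=> HX HY.
have D : [disjoint X & Y] := VAI_disj H1 H2 H12 HX HY.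
rewrite /G (EW_split HX HY) sum_setU_disj // /Pr prod_setU_disj //.
ring.
Qed.
End Split2.

Lemma Pr_bounds (Hpi : forall v, 0 < pi v <= 1) X : 0 <= Pr pi X <= 1.
Proof.
have H0 : 0 <= \prod_(s in X) (1 - pi s).
  apply: prodr_ge0 => s _; have := Hpi s; case/andP => _ h; by rewrite subr_ge0.
have H1 : \prod_(s in X) (1 - pi s) <= 1.
  apply: prodr_ile1 => s _; have := Hpi s; case/andP => h1 h2.
  by rewrite subr_ge0 h2 /= lerBlDr lerDl ltW.
rewrite /Pr; apply/andP; split; first by rewrite subr_ge0.
by rewrite lerBlDr lerDl.
Qed.
End Real.
Section Main.
Variables (R : realFieldType) (V : finType) (r : V) (parent : V -> V).
Variables (w pi p : V -> R).
Hypothesis Hroot : parent r = r.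
Hypothesis Hreach : forall v, exists k, iter k parent v = r.
Hypothesis Hpi : forall v, 0 < pi v <= 1.

Local Notation GG := (G r parent w pi p).
Local Notation M := (matryoshka r parent w pi p).

Lemma G_shift T x t : GG T (x + t) = GG T x + t * Pr pi T.
Proof. rewrite /G; ring. Qed.

Lemma part1 a (I1 I2 S : {set V}) : I1 \subset IA r parent a -> I2 \subset IA r parent a ->
  [disjoint I1 & I2] -> M a (I1 :|: I2) S -> M a I1 (S :&: VAI parent a I1).
Proof.
move=> H1 H2 H12 [x [Hx [HSsub HSopt] HSmax]].
set S1 := S :&: VAI parent a I1; set S2 := S :&: VAI parent a I2.
have VU : VAI parent a (I1 :|: I2) = VAI parent a I1 :|: VAI parent a I2 by rewrite /VAI bigcup_setU.
have HSdec : S = S1 :|: S2.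
  by rewrite /S1 /S2 -setIUr -VU; apply/esym/setIidPl.
have sub1 : S1 \subset VAI parent a I1 by apply: subsetIr.
have sub2 : S2 \subset VAI parent a I2 by apply: subsetIr.
set d := dist r parent w a.
set x1 := x + (d - x) * Pr pi S2.
have KE : forall T : {set V}, T \subset VAI parent a I1 -> GG (T :|: S2) x = GG T x1 + GG S2 x.
  move=> T HT; rewrite (G_split w pi p Hroot Hreach H1 H2 H12 x HT sub2) /x1 G_shift -/d; ring.
have sub12 : forall T : {set V}, T \subset VAI parent a I1 -> T :|: S2 \subset VAI parent a (I1 :|: I2).
  by move=> T HT; rewrite VU setUSS.
have [Hx0 Hxd] : 0 <= x /\ x <= d by move/andP: Hx.
have [P0 P1] : 0 <= Pr pi S2 /\ Pr pi S2 <= 1 by move/andP: (Pr_bounds Hpi S2).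
have OPT : forall T : {set V}, T \subset VAI parent a I1 -> GG T x1 <= GG S1 x1.
  move=> T HT; have := HSopt _ (sub12 _ HT); rewrite HSdec !KE //.
  by rewrite lerD2r.
exists x1; split.
- have B1 : x1 <= d by rewrite /x1; nra.
  have B0 : 0 <= x1 by rewrite /x1; nra.
  by apply/andP; split.
- by split.
- move=> T /properP [HST [t Ht Hnt]] HT [_ HTopt].
  apply: (HSmax (T :|: S2)); last first.
    split; first exact: sub12.
    move=> U HU; apply: (le_trans (HSopt _ HU)).
    rewrite {1}HSdec !KE // lerD2r; exact: HTopt.
  + exact: sub12.
  + apply/properP; split.
      by rewrite HSdec setSU.
    exists t; first by rewrite in_setU Ht.
    apply/negP => HtS; move: Hnt; rewrite /S1 inE HtS /=.
    by rewrite (subsetP HT _ Ht).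
Qed.
End Main.

Theorem proposition7 (R : realFieldType) (V : finType) (r : V) (parent : V -> V)
  (w pi p : V -> R)
  (Hroot : parent r = r)
  (Hreach : forall v, exists k, iter k parent v = r)
  (Hw : forall v, v != r -> 0 <= w v)
  (Hpi : forall v, 0 < pi v <= 1)
  (a : V) :
  (forall I I1 I2 : {set V},
     I \subset IA r parent a -> I = I1 :|: I2 -> [disjoint I1 & I2] ->
     forall S, matryoshka r parent w pi p a I S ->
       matryoshka r parent w pi p a I1 (S :&: VAI parent a I1) /\
       matryoshka r parent w pi p a I2 (S :&: VAI parent a I2)) /\
  (forall S, matryoshka r parent w pi p a (IA r parent a) S ->
     exists F : V -> {set V},
       (forall c, c \in IA r parent a -> matryoshka r parent w pi p a [set c] (F c)) /\
       S = \bigcup_(c in IA r parent a) F c).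
Proof.
split.
  move=> I I1 I2 HI EI H12 S HS.
  have H1 : I1 \subset IA r parent a by apply: subset_trans HI; rewrite EI subsetUl.
  have H2 : I2 \subset IA r parent a by apply: subset_trans HI; rewrite EI subsetUr.
  split.
    by apply: (part1 Hroot Hreach Hpi H1 H2 H12); rewrite -EI.
  apply: (part1 Hroot Hreach Hpi H2 H1); first by rewrite disjoint_sym.
  by rewrite setUC -EI.
move=> S HS; exists (fun c => S :&: Defs.comp parent a c); split.
  move=> c Hc.
  have Hs1 : [set c] \subset IA r parent a by rewrite sub1set.
  have Hs2 : IA r parent a :\ c \subset IA r parent a by apply: subsetDl.
  have Hd : [disjoint [set c] & IA r parent a :\ c] by rewrite disjoints1 !inE eqxx.
  have := part1 Hroot Hreach Hpi Hs1 Hs2 Hd.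
  have E : [set c] :|: (IA r parent a :\ c) = IA r parent a by apply: setD1K.
  rewrite E => /(_ w p S HS).
  by rewrite /VAI big_set1.
have [x [_ [HSsub _] _]] := HS.
apply/setP => q; apply/idP/bigcupP.
  move=> Hq; have := subsetP HSsub _ Hq => /bigcupP [c Hc Hqc].
  by exists c => //; rewrite inE Hq.
by case=> c _; rewrite inE => /andP [].
Qed.
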